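(* Consider the $64$ constraints (subsets of the six conditions $C_{in}^{\rightarrow},C_{in}^{\leftarrow},C_{out}^{\rightarrow},C_{out}^{\leftarrow},C_{undec}^{\rightarrow},C_{undec}^{\leftarrow}$). Then: (a) every constraint of cardinality $0$, $1$ or $2$ is weak; (b) among the $20$ constraints of cardinality $3$, exactly $\{C_{in}^{\rightarrow},C_{out}^{\rightarrow},C_{undec}^{\rightarrow}\}$ and $\{C_{in}^{\leftarrow},C_{out}^{\leftarrow},C_{undec}^{\leftarrow}\}$ are correct and non-redundant, and the other $18$ are weak; (c) among the $15$ constraints of cardinality $4$, $\{C_{in}^{\rightarrow},C_{in}^{\leftarrow},C_{out}^{\rightarrow},C_{out}^{\leftarrow}\}$, $\{C_{out}^{\rightarrow},C_{out}^{\leftarrow},C_{undec}^{\rightarrow},C_{undec}^{\leftarrow}\}$ and $\{C_{in}^{\rightarrow},C_{in}^{\leftarrow},C_{undec}^{\rightarrow},C_{undec}^{\leftarrow}\}$ are correct and non-redundant, the six constraints $\{C_{undec}^{\rightarrow},C_{undec}^{\leftarrow},C_{in}^{\rightarrow},C_{out}^{\leftarrow}\}$, $\{C_{undec}^{\rightarrow},C_{undec}^{\leftarrow},C_{in}^{\leftarrow},C_{out}^{\rightarrow}\}$, $\{C_{out}^{\rightarrow},C_{out}^{\leftarrow},C_{in}^{\rightarrow},C_{undec}^{\leftarrow}\}$, $\{C_{out}^{\rightarrow},C_{out}^{\leftarrow},C_{in}^{\leftarrow},C_{undec}^{\rightarrow}\}$, $\{C_{in}^{\rightarrow},C_{in}^{\leftarrow},C_{out}^{\rightarrow},C_{undec}^{\leftarrow}\}$,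 $\{C_{in}^{\rightarrow},C_{in}^{\leftarrow},C_{out}^{\leftarrow},C_{undec}^{\rightarrow}\}$ are weak, and the remaining $6$ are redundant; (d) every constraint of cardinality $5$ or $6$ is redundant.
   Context: An argumentation framework is a pair $(\mathcal{A},\mathcal{R})$ with $\mathcal{A}$ a finite set of arguments and $\mathcal{R}\subseteq\mathcal{A}\times\mathcal{A}$ (self-attacks allowed); $a^{-}=\{b:(b,a)\in\mathcal{R}\}$. For a total function $\mathcal{L}ab:\mathcal{A}\to\{\mathtt{in},\mathtt{out},\mathtt{undec}\}$ and an argument $a$, define the six conditions: $C_{in}^{\rightarrow}$: $\mathcal{L}ab(a)=\mathtt{in}\Rightarrow \forall b\in a^-\ \mathcal{L}ab(b)=\mathtt{out}$; $C_{in}^{\leftarrow}$: $(\forall b\in a^-\ \mathcal{L}ab(b)=\mathtt{out})\Rightarrow \mathcal{L}ab(a)=\mathtt{in}$; $C_{out}^{\rightarrow}$: $\mathcal{L}ab(a)=\mathtt{out}\Rightarrow \exists b\in a^-\ \mathcal{L}ab(b)=\mathtt{in}$; $C_{out}^{\leftarrow}$: $(\exists b\in a^-\ \mathcal{L}ab(b)=\mathtt{in})\Rightarrow \mathcal{L}ab(a)=\mathtt{out}$; $C_{undec}^{\rightarrow}$: $\mathcal{L}ab(a)=\mathtt{undec}\Rightarrow (\forall b\in a^-\ \mathcal{L}ab(b)\neq\mathtt{in}\ \wedge\ \exists c\in a^-\ \mathcal{L}ab(c)=\mathtt{undec})$; $C_{undec}^{\leftarrow}$: $(\forall b\in a^-\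 \mathcal{L}ab(b)\neq\mathtt{in}\ \wedge\ \exists c\in a^-\ \mathcal{L}ab(c)=\mathtt{undec})\Rightarrow \mathcal{L}ab(a)=\mathtt{undec}$. $\mathcal{L}ab$ is a complete labelling iff it satisfies all six conditions for every $a\in\mathcal{A}$. A constraint is any subset of these six conditions; a labelling satisfies a constraint if it satisfies each condition in it for every argument. A constraint is: weak if there exist a finite argumentation framework and a total labelling satisfying it that is not complete; correct if, for every finite argumentation framework, the total labellings satisfying it are exactly the complete labellings; correct and non-redundant if it is correct and every strict subset of it is weak; redundant if it is correct and some strict subset of it is correct. *)

(* Defs.v *)
From HB Require Import structures.
From mathcomp Require Import all_boot.
Set Implicit Arguments. Unset Strict Implicit. Unset Printing Implicit Defensive.

Inductive label := In | Out | Undec.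

Definition is_in (l : label) : bool := if l is In then true else false.
Definition is_out (l : label) : bool := if l is Out then true else false.
Definition is_undec (l : label) : bool := if l is Undec then true else false.

Inductive cond := CinF | CinB | CoutF | CoutB | CundecF | CundecB.
(* CinF = C_in^->, CinB = C_in^<-, etc. *)

Definition cond_to (c : cond) : 'I_6 :=
  match c with
  | CinF => @Ordinal 6 0 isT | CinB => @Ordinal 6 1 isT
  | CoutF => @Ordinal 6 2 isT | CoutB => @Ordinal 6 3 isT
  | CundecF => @Ordinal 6 4 isT | CundecB => @Ordinal 6 5 isT
  end.
Definition cond_of (i : 'I_6) : cond :=
  match val i with
  | 0 => CinF | 1 => CinB | 2 => CoutF | 3 => CoutB | 4 => CundecF | _ => CundecB
  end.
Lemma cond_toK : cancel cond_to cond_of. Proof. by case. Qed.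
HB.instance Definition _ := Finite.copy cond (can_type cond_toK).

(* An argumentation framework: a finite type T of arguments with attack
   relation R (R b a means b attacks a); a total labelling Lab : T -> label. *)
Section Conds.
Variables (T : finType) (R : rel T) (Lab : T -> label).

Definition holds (c : cond) (a : T) : bool :=
  match c with
  | CinF => is_in (Lab a) ==> [forall b, R b a ==> is_out (Lab b)]
  | CinB => [forall b, R b a ==> is_out (Lab b)] ==> is_in (Lab a)
  | CoutF => is_out (Lab a) ==> [exists b, R b a && is_in (Lab b)]
  | CoutB => [exists b, R b a && is_in (Lab b)] ==> is_out (Lab a)
  | CundecF => is_undec (Lab a) ==>
      ([forall b, R b a ==> ~~ is_in (Lab b)] && [exists c, R c a && is_undec (Lab c)])
  | CundecB =>
      ([forall b, R b a ==> ~~ is_in (Lab b)] && [exists c, R c a && is_undec (Lab c)])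
      ==> is_undec (Lab a)
  end.

Definition complete : Prop := forall a : T, forall c : cond, holds c a.

Definition satisfies (C : {set cond}) : Prop :=
  forall c, c \in C -> forall a : T, holds c a.
End Conds.

Definition weak (C : {set cond}) : Prop :=
  exists (T : finType) (R : rel T) (Lab : T -> label),
    satisfies R Lab C /\ ~ complete R Lab.

Definition correct (C : {set cond}) : Prop :=
  forall (T : finType) (R : rel T) (Lab : T -> label),
    satisfies R Lab C <-> complete R Lab.

Definition correct_nonredundant (C : {set cond}) : Prop :=
  correct C /\ forall D : {set cond}, D \proper C -> weak D.

Definition redundant (C : {set cond}) : Prop :=
  correct C /\ exists D : {set cond}, D \proper C /\ correct D.

(* Main.v *)
Require Import Defs.
From HB Require Import structures.
From mathcomp Require Import all_boot.
Set Implicit Arguments. Unset Strict Implicit.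

Definition hb (c : cond) (l : label) (x y z : bool) : bool :=
  match c with
  | CinF => is_in l ==> x
  | CinB => x ==> is_in l
  | CoutF => is_out l ==> y
  | CoutB => y ==> is_out l
  | CundecF => is_undec l ==> z
  | CundecB => z ==> is_undec l
  end.

Definition oneHot (x y z : bool) :=
  [&& x, ~~y & ~~z] || [&& ~~x, y & ~~z] || [&& ~~x, ~~y & z].

Definition bools := [:: true; false].
Definition bits := (bool * bool * bool * bool * bool * bool)%type.
Definition sel (b : bits) (c : cond) : bool :=
  let: (b1, b2, b3, b4, b5, b6) := b in
  match c with CinF => b1 | CinB => b2 | CoutF => b3 | CoutB => b4
  | CundecF => b5 | CundecB => b6 end.
Definition conds := [:: CinF; CinB; CoutF; CoutB; CundecF; CundecB].
Lemma mem_conds c : c \in conds. Proof. by case: c. Qed.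

Definition cl (b : bits) l :=
  all (fun x => all (fun y => all (fun z =>
    oneHot x y z ==> (all (fun c => sel b c ==> hb c l x y z) conds ==>
                      all (fun c => hb c l x y z) conds))
    bools) bools) bools.
Definition ccheck b := [&& cl b In, cl b Out & cl b Undec].
Lemma cl_of b l : ccheck b -> cl b l.
Proof. by case: l => /and3P []. Qed.

Definition sv (b : bits) : {set cond} := [set c | sel b c].
Definition bitsof (C : {set cond}) : bits :=
  (CinF \in C, CinB \in C, CoutF \in C, CoutB \in C, CundecF \in C, CundecB \in C).
Lemma svK C : sv (bitsof C) = C.
Proof. by apply/setP => c; rewrite inE; case: c. Qed.
Lemma bitsK b : bitsof (sv b) = b.
Proof. by case: b => [[[[[b1 b2] b3] b4] b5] b6]; rewrite /bitsof !inE. Qed.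
Lemma sv_inj b b' : sv b = sv b' -> b = b'.
Proof. by move=> H; rewrite -(bitsK b) H bitsK. Qed.
Lemma sv_eq b b' : (sv b == sv b') = (b == b').
Proof. by apply/eqP/eqP => [/sv_inj|->]. Qed.

Section P.
Variables (T : finType) (R : rel T) (Lab : T -> label).
Definition pi a := [forall b, R b a ==> is_out (Lab b)].
Definition po a := [exists b, R b a && is_in (Lab b)].
Definition pu a := [forall b, R b a ==> ~~ is_in (Lab b)] && [exists c, R c a && is_undec (Lab c)].
Lemma holds_eq c a : holds R Lab c a = hb c (Lab a) (pi a) (po a) (pu a).
Proof. by case: c. Qed.
Lemma oh a : oneHot (pi a) (po a) (pu a).
Proof.
rewrite /oneHot /pi /po /pu.
have [Hi|Hi] := boolP [forall b, R b a ==> is_out (Lab b)].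
  have Hno : ~~ [exists b, R b a && is_in (Lab b)].
    apply/existsP => -[b /andP [Rb Ib]]; move/forallP: Hi => /(_ b).
    by rewrite Rb; case: (Lab b) Ib.
  have Hnu : ~~ [exists c, R c a && is_undec (Lab c)].
    apply/existsP => -[b /andP [Rb Ib]]; move/forallP: Hi => /(_ b).
    by rewrite Rb; case: (Lab b) Ib.
  by rewrite Hno (negbTE Hnu) andbF.
have [Ho|Ho] := boolP [exists b, R b a && is_in (Lab b)].
  have Hnu : ~~ [forall b, R b a ==> ~~ is_in (Lab b)].
    apply/forallP => H; case/existsP: Ho => b /andP [Rb Ib].
    by move: (H b); rewrite Rb Ib.
  by rewrite (negbTE Hnu) /=.
have Hf : [forall b, R b a ==> ~~ is_in (Lab b)].
  apply/forallP => b; apply/implyP => Rb; apply/negP => Ib.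
  by move/existsP: Ho; apply; exists b; rewrite Rb.
have Hu : [exists c, R c a && is_undec (Lab c)].
  move/forallP: Hi => Hi; apply/existsP.
  have [b Hb] : exists b, ~~ (R b a ==> is_out (Lab b)).
    by apply/existsP; rewrite -negb_forall; apply/negP => /forallP.
  exists b; move: Hb; rewrite negb_imply => /andP [Rb Ob]; rewrite Rb /=.
  move/forallP: Hf => /(_ b); rewrite Rb /=.
  by case: (Lab b) Ob.
by rewrite Hf Hu.
Qed.
End P.

Lemma correct_of b : ccheck b -> correct (sv b).
Proof.
move=> Hc T R Lab; split; last by move=> H c _ a; apply: H.
move=> H a c; rewrite holds_eq.
have Hb : forall b : bool, b \in bools by case.
move/(@cl_of b (Lab a))/allP: Hc =>  /(_ _ (Hb _)) /allP /(_ _ (Hb _))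
  /allP /(_ _ (Hb _)) /implyP /(_ (oh R Lab a)) /implyP H2.
have : all (fun c => sel b c ==> hb c (Lab a) (pi R Lab a) (po R Lab a) (pu R Lab a)) conds.
  apply/allP => d _; apply/implyP => Hd; rewrite -holds_eq; apply: H; by rewrite inE.
by move/H2/allP => /(_ c (mem_conds c)).
Qed.

Lemma weak_sub (C D : {set cond}) : D \subset C -> weak C -> weak D.
Proof.
move=> sDC [T [R [Lab [H1 H2]]]]; exists T, R, Lab; split => //.
by move=> c Hc; apply: H1; apply: (subsetP sDC).
Qed.

Lemma correct_sup (C D : {set cond}) : D \subset C -> correct D -> correct C.
Proof.
move=> sDC HD T R Lab; split; last by move=> H c _ a; apply: H.
by move=> H; apply/HD => c Hc; apply: H; apply: (subsetP sDC).
Qed.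

Lemma weak_correct C : weak C -> ~ correct C.
Proof. by move=> [T [R [Lab [H1 H2]]]] H; apply: H2; apply/H. Qed.


Definition bA : bits := (true, false, true, false, true, false).
Definition bB : bits := (false, true, false, true, false, true).
Definition bP : bits := (true, true, true, true, false, false).
Definition bQ : bits := (false, false, true, true, true, true).
Definition bS : bits := (true, true, false, false, true, true).
Definition w1 : bits := (true, false, false, true, true, true).
Definition w2 : bits := (false, true, true, false, true, true).
Definition w3 : bits := (true, false, true, true, false, true).
Definition w4 : bits := (false, true, true, true, true, false).
Definition w5 : bits := (true, true, true, false, false, true).
Definition w6 : bits := (true, true, false, true, true, false).

Ltac lit := apply/setP; case; rewrite !inE.
Lemma lA : [set CinF; CoutF; CundecF] = sv bA. Proof. by lit. Qed.
Lemma lB : [set CinB; CoutB; CundecB] = sv bB. Proof. by lit. Qed.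
Lemma lP : [set CinF; CinB; CoutF; CoutB] = sv bP. Proof. by lit. Qed.
Lemma lQ : [set CoutF; CoutB; CundecF; CundecB] = sv bQ. Proof. by lit. Qed.
Lemma lS : [set CinF; CinB; CundecF; CundecB] = sv bS. Proof. by lit. Qed.
Lemma l1 : [set CundecF; CundecB; CinF; CoutB] = sv w1. Proof. by lit. Qed.
Lemma l2 : [set CundecF; CundecB; CinB; CoutF] = sv w2. Proof. by lit. Qed.
Lemma l3 : [set CoutF; CoutB; CinF; CundecB] = sv w3. Proof. by lit. Qed.
Lemma l4 : [set CoutF; CoutB; CinB; CundecF] = sv w4. Proof. by lit. Qed.
Lemma l5 : [set CinF; CinB; CoutF; CundecB] = sv w5. Proof. by lit. Qed.
Lemma l6 : [set CinF; CinB; CoutB; CundecF] = sv w6. Proof. by lit. Qed.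

Lemma forall_bool (P : pred bool) : [forall x, P x] = P true && P false.
Proof.
apply/forallP/andP => [H|[H1 H2] x]; first by split; apply: H.
by case: x.
Qed.
Lemma exists_bool (P : pred bool) : [exists x, P x] = P true || P false.
Proof.
apply/existsP/orP => [[x H]|[H|H]]; last (by exists false); last (by exists true).
by case: x H => H; [left|right].
Qed.
Lemma forall_unit (P : pred unit) : [forall x, P x] = P tt.
Proof. by apply/forallP/idP => [|H []]; [apply|]. Qed.
Lemma exists_unit (P : pred unit) : [exists x, P x] = P tt.
Proof. by apply/existsP/idP => [[[] H]|H] //; exists tt. Qed.

Lemma weak_of (T : finType) (R : rel T) (Lab : T -> label) (C : {set cond}) c0 a0 :
  (forall c, c \in C -> forall a, holds R Lab c a) ->
  ~~ holds R Lab c0 a0 -> weak C.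
Proof. by move=> H1 H2; exists T, R, Lab; split => // H; move/negP: H2; apply. Qed.

Ltac hs := rewrite /holds ?forall_bool ?exists_bool ?forall_unit ?exists_unit.
Ltac wk := [> let c0 := fresh in let a0 := fresh in
   move=> c0; rewrite inE; case: c0 => //= _ a0; case: a0; hs | hs].
Lemma weak1 : weak (sv w1).
Proof. apply: (@weak_of unit (fun _ _ => false) (fun _ => Out) _ CinB tt); wk; done. Qed.
Lemma weak2 : weak (sv w2).
Proof. apply: (@weak_of unit (fun _ _ => true) (fun _ => In) _ CinF tt); wk; done. Qed.
Lemma weak3 : weak (sv w3).
Proof. apply: (@weak_of unit (fun _ _ => false) (fun _ => Undec) _ CundecF tt); wk; done. Qed.
Lemma weak4 : weak (sv w4).
Proof. apply: (@weak_of bool (fun x _ => ~~ x) (fun x => if x then In else Undec) _ CinF true); wk; done. Qed.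
Lemma weak5 : weak (sv w5).
Proof. apply: (@weak_of bool (fun x y => ~~ x && y) (fun x => if x then Undec else In) _ CundecF true); wk; done. Qed.
Lemma weak6 : weak (sv w6).
Proof. apply: (@weak_of bool (fun x _ => ~~ x) (fun x => if x then Out else Undec) _ CoutF true); wk; done. Qed.

Definition cnt (b : bits) : nat := count (sel b) conds.
Lemma card_sv b : #|sv b| = cnt b.
Proof.
have Hu : uniq (filter (sel b) conds) by apply: filter_uniq.
rewrite /cnt -size_filter -(card_uniqP Hu).
by apply: eq_card => c; rewrite inE mem_filter mem_conds andbT.
Qed.

Definition subb (b b' : bits) := all (fun c => sel b c ==> sel b' c) conds.
Lemma subset_sv b b' : (sv b \subset sv b') = subb b b'.
Proof.
apply/subsetP/allP => H c.
  by move=> _; apply/implyP => Hc; have := H c; rewrite !inE; apply.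
by rewrite !inE => Hc; move/implyP: (H c (mem_conds c)); apply.
Qed.
Lemma proper_sv b b' : (sv b \proper sv b') = subb b b' && ~~ subb b' b.
Proof. by rewrite properE !subset_sv. Qed.

Definition wbits := [:: w1; w2; w3; w4; w5; w6].
Definition mbits := [:: bA; bB; bP; bQ; bS].
Definition isweak b := has (subb b) wbits.
Definition iscorrect b := has (fun m => subb m b) mbits.
Definition isred b := has (fun m => subb m b && ~~ subb b m) mbits.
Definition bl := [:: true; false].
Definition ext {A : Type} (s : seq A) : seq (A * bool) := [seq (p, x) | p <- s, x <- bl].
Definition allbits : seq bits := ext (ext (ext (ext (ext bl)))).
Lemma mem_allbits b : b \in allbits.
Proof. by case: b => [[[[[[] []] []] []] []] []]. Qed.
Definition allpw b := all (fun d => (subb d b && ~~ subb b d) ==> isweak d) allbits.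

Lemma isweakP b : isweak b -> weak (sv b).
Proof.
case/hasP => w; rewrite !inE => Hw Hs; apply: (@weak_sub (sv w)); first by rewrite subset_sv.
by move: Hw => /orP [/eqP->|/orP [/eqP->|/orP [/eqP->|/orP [/eqP->|/orP [/eqP->|/eqP->]]]]];
  [exact weak1|exact weak2|exact weak3|exact weak4|exact weak5|exact weak6].
Qed.

Lemma mcorrect m : m \in mbits -> correct (sv m).
Proof.
rewrite !inE => /orP [/eqP->|/orP [/eqP->|/orP [/eqP->|/orP [/eqP->|/eqP->]]]];
  apply: correct_of; vm_compute; reflexivity.
Qed.

Lemma iscorrectP b : iscorrect b -> correct (sv b).
Proof.
case/hasP => m Hm Hs; apply: (@correct_sup _ (sv m)); last exact: mcorrect.
by rewrite subset_sv.
Qed.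

Lemma isredP b : isred b -> redundant (sv b).
Proof.
case/hasP => m Hm /andP [Hs Hns]; split.
  by apply: (@correct_sup _ (sv m)); [rewrite subset_sv | exact: mcorrect].
by exists (sv m); split; [rewrite proper_sv Hs | exact: mcorrect].
Qed.

Lemma cnrP b : iscorrect b -> allpw b -> correct_nonredundant (sv b).
Proof.
move=> Hc Hp; split; first exact: iscorrectP.
move=> D; rewrite -(svK D) proper_sv => Hd; apply: isweakP.
by move/allP: Hp => /(_ _ (mem_allbits (bitsof D))) /implyP; apply.
Qed.

Definition cnrb := [:: bP; bQ; bS].
Definition wlb := [:: w1; w2; w3; w4; w5; w6].
Definition spec (b : bits) : bool :=
  [&& (cnt b <= 2) ==> isweak b,
      (cnt b == 3) ==> ((b == bA) || (b == bB)) ==> (iscorrect b && allpw b),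
      (cnt b == 3) ==> (b != bA) ==> (b != bB) ==> isweak b,
      (cnt b == 4) ==> (b \in cnrb) ==> (iscorrect b && allpw b),
      (cnt b == 4) ==> (b \in wlb) ==> isweak b,
      (cnt b == 4) ==> (b \notin cnrb) ==> (b \notin wlb) ==> isred b &
      (5 <= cnt b) ==> isred b].
Lemma spec_ok b : spec b.
Proof. case: b => [[[[[[] []] []] []] []] []]; vm_compute; reflexivity. Qed.

Theorem corollary1 :
  forall C : {set cond},
  (* (a) *)
  ((#|C| <= 2)%N -> weak C) /\
  (* (b) *)
  (#|C| = 3 ->
     ((C = [set CinF; CoutF; CundecF] \/ C = [set CinB; CoutB; CundecB]) ->
        correct_nonredundant C) /\
     (C <> [set CinF; CoutF; CundecF] -> C <> [set CinB; CoutB; CundecB] -> weak C)) /\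
  (* (c) *)
  (#|C| = 4 ->
     let CNR := [:: [set CinF; CinB; CoutF; CoutB];
                    [set CoutF; CoutB; CundecF; CundecB];
                    [set CinF; CinB; CundecF; CundecB]] in
     let W := [:: [set CundecF; CundecB; CinF; CoutB];
                  [set CundecF; CundecB; CinB; CoutF];
                  [set CoutF; CoutB; CinF; CundecB];
                  [set CoutF; CoutB; CinB; CundecF];
                  [set CinF; CinB; CoutF; CundecB];
                  [set CinF; CinB; CoutB; CundecF]] in
     (C \in CNR -> correct_nonredundant C) /\
     (C \in W -> weak C) /\
     (C \notin CNR -> C \notin W -> redundant C)) /\
  (* (d) *)
  ((5 <= #|C|)%N -> redundant C).
Proof.
move=> C; rewrite -(svK C); move: (bitsof C) => b.
rewrite lA lB lP lQ lS l1 l2 l3 l4 l5 l6 card_sv.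
move: (spec_ok b); rewrite /spec /cnrb /wlb !in_cons !in_nil.
case/andP => h1 /andP [h2 /andP [h3 /andP [h4 /andP [h5 /andP [h6 h7]]]]].
split; first by move=> H; apply: isweakP; move/implyP: h1; apply.
split.
  move=> H3; split.
    move=> Hor; have Hb : (b == bA) || (b == bB).
      by case: Hor => /sv_inj ->; rewrite eqxx ?orbT.
    move: h2; rewrite H3 eqxx Hb /= => /andP [Hc Hp]; exact: cnrP.
  move=> n1 n2; apply: isweakP.
  have e1 : b != bA by apply/eqP => E; apply: n1; rewrite E.
  have e2 : b != bB by apply/eqP => E; apply: n2; rewrite E.
  by move: h3; rewrite H3 e1 e2.
split; last by move=> H; apply: isredP; move/implyP: h7; apply.
move=> H4; rewrite !sv_eq.
move: h4 h5 h6; rewrite H4 eqxx /= => h4 h5 h6.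
split; first by move=> Hin; move/implyP: h4 => /(_ Hin) /andP [Hc Hp]; exact: cnrP.
split; first by move=> Hin; apply: isweakP; move/implyP: h5; apply.
by move=> n1 n2; apply: isredP; move: h6; rewrite (negbTE n1) (negbTE n2).
Qed.
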